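(* Let $K$ be an algebraically closed field of characteristic $0$ and let $X$ be a finite set of distinct points in $\mathbb{P}^1\times\mathbb{P}^1\times\mathbb{P}^1$ over $K$, with $t_1=|\pi_1(X)|$ and $t_2=|\pi_2(X)|$. Suppose $\mathcal{L}$ is a line of type $(1,1,0)$ with $X\cap\mathcal{L}\neq\emptyset$ but $X\not\subseteq\mathcal{L}$. Set $X_2=X\cap\mathcal{L}$ and $X_1=X\setminus X_2$. Then $R_{t_1-1,t_2-1,0}=(I(X_1)+I(X_2))_{t_1-1,t_2-1,0}$. Consequently, $\dim_K\big(R/(I(X_1)+I(X_2))\big)_{t_1-1,t_2-1,k}=0$ for all $k\ge0$.
   Context: Let $R=K[x_0,x_1,y_0,y_1,z_0,z_1]$ be $\mathbb{N}^3$-graded with $\deg x_i=(1,0,0)$, $\deg y_i=(0,1,0)$, $\deg z_i=(0,0,1)$. For a point $P=[a_0:a_1]\times[b_0:b_1]\times[c_0:c_1]$, $I(P)=(a_1x_0-a_0x_1,\,b_1y_0-b_0y_1,\,c_1z_0-c_0z_1)$, and for a finite set $Y=\{P_1,\dots,P_s\}$, $I(Y)=\bigcap_i I(P_i)$. $\pi_i$ denotes the projection onto the $i$-th factor $\mathbb{P}^1$. A line of type $(1,1,0)$ is the subvariety defined by an ideal $(L,L')$ with $L\in R_{1,0,0}$, $L'\in R_{0,1,0}$ nonzero. *)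

(* Defs.v *)
From HB Require Import structures.
From mathcomp Require Import all_boot all_order all_algebra.
From mathcomp Require Import mpoly.
Set Implicit Arguments. Unset Strict Implicit. Unset Printing Implicit Defensive.
Import GRing.Theory.
Local Open Scope ring_scope.

(* R = K[x0,x1,y0,y1,z0,z1] is {mpoly K[6]} with
   x0 = 'X_0, x1 = 'X_1, y0 = 'X_2, y1 = 'X_3, z0 = 'X_4, z1 = 'X_5. *)
Section Defs.
Variable K : fieldType.
Notation R := {mpoly K[6]}.

Definition vx0 : 'I_6 := inord 0. Definition vx1 : 'I_6 := inord 1.
Definition vy0 : 'I_6 := inord 2. Definition vy1 : 'I_6 := inord 3.
Definition vz0 : 'I_6 := inord 4. Definition vz1 : 'I_6 := inord 5.

(* f lies in the graded piece R_{(a,b,c)}: every monomial of f has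
   tridegree (a,b,c) (the zero polynomial lies in every piece). *)
Definition in_trideg (a b c : nat) (f : R) : Prop :=
  forall m : 'X_{1..6}, m \in msupp f ->
    [/\ (m vx0 + m vx1 = a)%N, (m vy0 + m vy1 = b)%N & (m vz0 + m vz1 = c)%N].

(* A point of P^1 is represented by homogeneous coordinates (a0,a1) <> (0,0);
   canonical representative used to compare points projectively. *)
Definition P1_ok (p : K * K) : bool := p != (0, 0).
Definition P1_norm (p : K * K) : K * K :=
  if p.1 != 0 then (1, p.2 / p.1) else (0, 1).

Definition P3 := ((K * K) * (K * K) * (K * K))%type.
Definition pt_ok (P : P3) : bool := [&& P1_ok P.1.1, P1_ok P.1.2 & P1_ok P.2].
Definition pt_norm (P : P3) : P3 := (P1_norm P.1.1, P1_norm P.1.2, P1_norm P.2).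

Definition point_set (X : seq P3) : bool :=
  all pt_ok X && uniq (map pt_norm X).

Definition card_pi1 (X : seq P3) : nat := size (undup (map (fun P => P1_norm P.1.1) X)).
Definition card_pi2 (X : seq P3) : nat := size (undup (map (fun P => P1_norm P.1.2) X)).

Definition in_IP (P : P3) (f : R) : Prop :=
  let: (a, b, c) := P in
  exists u v w : R,
    f = u * (a.2 *: 'X_vx0 - a.1 *: 'X_vx1)
      + v * (b.2 *: 'X_vy0 - b.1 *: 'X_vy1)
      + w * (c.2 *: 'X_vz0 - c.1 *: 'X_vz1).

Definition in_IY (Y : seq P3) (f : R) : Prop := forall P, P \in Y -> in_IP P f.

Definition in_sum_IY (Y1 Y2 : seq P3) (f : R) : Prop :=
  exists g h : R, [/\ in_IY Y1 g, in_IY Y2 h & f = g + h].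

(* A line of type (1,1,0) defined by (L, L') with
   L = l.1 x0 + l.2 x1 in R_{1,0,0}, L' = l'.1 y0 + l'.2 y1 in R_{0,1,0}, both
   nonzero (i.e. l, l' <> (0,0)). *)
Definition on_line (l l' : K * K) (P : P3) : bool :=
  (l.1 * P.1.1.1 + l.2 * P.1.1.2 == 0) && (l'.1 * P.1.2.1 + l'.2 * P.1.2.2 == 0).

End Defs.

(* Main.v *)
Require Import Defs.
From HB Require Import structures.
From mathcomp Require Import all_boot all_order all_algebra.
From mathcomp Require Import mpoly ring.
Import GRing.Theory.
Local Open Scope ring_scope.
Section S0.
Variable K : fieldType.

Definition dotl (l a : K * K) := l.1 * a.1 + l.2 * a.2.

Lemma solve1 (l1 l2 u1 u2 : K) : u1 != 0 -> l1 * u1 + l2 * u2 = 0 -> l1 = - (l2 * u2) / u1.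
Proof.
move=> u1nz h; have h' : l1 * u1 = - (l2 * u2).
  by apply/eqP; rewrite -addr_eq0 h.
by rewrite -h' mulfK.
Qed.

Lemma H1 (l1 l2 u1 u2 : K) : (l1, l2) != (0, 0) -> u1 != 0 -> l1 * u1 + l2 * u2 = 0 ->
  l2 != 0 /\ u2 / u1 = - l1 / l2.
Proof.
move=> hl u1nz h.
have l2nz : l2 != 0.
  apply/eqP => l20; move: h hl; rewrite l20 mul0r addr0 => /eqP.
  by rewrite mulf_eq0 (negbTE u1nz) orbF => /eqP ->; rewrite eqxx.
split => //; rewrite (@solve1 _ _ _ _ u1nz h); field.
by rewrite u1nz l2nz.
Qed.

Lemma norm_dot (l u : K * K) : u != (0, 0) ->
  (dotl l (P1_norm u) == 0) = (dotl l u == 0).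
Proof.
case: u => u1 u2; rewrite /P1_norm /dotl /= xpair_eqE negb_and.
case: (eqVneq u1 0) => [->|u1nz] /= hu.
  by rewrite !mulr0 !add0r mulr1 mulf_eq0 (negbTE hu) orbF.
have -> : l.1 * 1 + l.2 * (u2 / u1) = (l.1 * u1 + l.2 * u2) / u1 by field.
by rewrite mulf_eq0 invr_eq0 (negbTE u1nz) orbF.
Qed.

Lemma norm_uniq (l u v : K * K) : l != (0, 0) -> u != (0, 0) -> v != (0, 0) ->
  dotl l u == 0 -> dotl l v == 0 -> P1_norm u = P1_norm v.
Proof.
case: l => l1 l2; case: u => u1 u2; case: v => v1 v2.
rewrite /P1_norm /dotl /= => hl; rewrite !xpair_eqE !negb_and => hu hv /eqP hU /eqP hV.
case: (eqVneq u1 0) => [u10|u1nz]; case: (eqVneq v1 0) => [v10|v1nz] //=.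
- have [l2nz _] := @H1 _ _ _ _ hl v1nz hV.
  move: hU hu; rewrite u10 mulr0 add0r => /eqP; rewrite mulf_eq0 (negbTE l2nz) /=.
  by move=> ->; rewrite eqxx.
- have [l2nz _] := @H1 _ _ _ _ hl u1nz hU.
  move: hV hv; rewrite v10 mulr0 add0r => /eqP; rewrite mulf_eq0 (negbTE l2nz) /=.
  by move=> ->; rewrite eqxx.
- have [_ e1] := @H1 _ _ _ _ hl u1nz hU; have [_ e2] := @H1 _ _ _ _ hl v1nz hV.
  by rewrite e1 e2.
Qed.


Notation R := {mpoly K[6]}.
Definition frm (a : K * K) (i j : 'I_6) : R := a.2 *: 'X_i - a.1 *: 'X_j.
Definition lnf (l : K * K) (i j : 'I_6) : R := l.1 *: 'X_i + l.2 *: 'X_j.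

Lemma normform (u : K * K) i j : u != (0, 0) ->
  exists lam : K, frm (P1_norm u) i j = lam *: frm u i j.
Proof.
case: u => u1 u2; rewrite /P1_norm /frm /= xpair_eqE negb_and.
case: (eqVneq u1 0) => [->|u1nz] /= hu.
  exists (u2^-1); rewrite -!mul_mpolyC.
  have h : (u2^-1 * u2)%:MP = 1 :> R by rewrite mulVf // mpolyC1.
  move: h; move: (u2^-1) => e h; rewrite -[X in X = _]mul1r -h; ring.
exists (u1^-1); rewrite -[X in X *: 'X_j](mulVf u1nz).
move: (u1^-1) => e; rewrite -!mul_mpolyC; ring.
Qed.

Lemma linform (l u : K * K) i j : u != (0, 0) -> dotl l u == 0 ->
  exists mu : K, lnf l i j = mu *: frm u i j.
Proof.
case: l => l1 l2; case: u => u1 u2; rewrite /lnf /frm /dotl /= xpair_eqE negb_and.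
case: (eqVneq u1 0) => [->|u1nz] /= hu /eqP h.
  move: h; rewrite mulr0 add0r => /eqP; rewrite mulf_eq0 (negbTE hu) orbF => /eqP ->.
  exists (l1 / u2); rewrite -[X in X *: 'X_i](divfK hu).
  move: (u2^-1) => e; rewrite -!mul_mpolyC; ring.
rewrite (@solve1 _ _ _ _ u1nz h).
exists (- l2 / u1); rewrite -[X in X *: 'X_j](divfK u1nz).
move: (u1^-1) => e; rewrite -!mul_mpolyC; ring.
Qed.

Lemma keylist (X0 X1 : R) (l : K * K) (ls : seq (K * K)) :
  all (fun a => dotl l a != 0) ls -> forall n0 n1, (n0 + n1 = size ls)%N ->
  exists c U, X0 ^+ n0 * X1 ^+ n1 =
    c *: \prod_(a <- ls) (a.2 *: X0 - a.1 *: X1) + (l.1 *: X0 + l.2 *: X1) * U.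
Proof.
elim: ls => [|a ls IH] /=.
  move=> _ n0 n1 /eqP; rewrite addn_eq0 => /andP[/eqP-> /eqP->].
  by exists 1, 0; rewrite big_nil !expr0 mulr1 scale1r mulr0 addr0.
move=> /andP[Da Hall] [|n0] n1 Hs.
  case: n1 Hs => [|n1] // Hs.
  have [|c [U E]] := IH Hall 0%N n1; first by move: Hs; rewrite !add0n => -[].
  have h1 : ((dotl l a)^-1 * dotl l a)%:MP = 1 :> R by rewrite mulVf // mpolyC1.
  move: h1; move: ((dotl l a)^-1) => e h1.
  rewrite big_cons; set G := \prod_(a <- ls) (a.2 *: X0 - a.1 *: X1) in E *; clearbody G.
  exists (- (c * l.1) * e), ((e * dotl l a) *: (X1 * U) + (e * a.2 * c) *: G).
   move: E; rewrite expr0 !mul1r exprS => ->.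
  rewrite -[X in X = _]mul1r -[X in X * _ = _]h1 /dotl -!mul_mpolyC; ring.
have [|c [U E]] := IH Hall n0 n1; first by move: Hs; rewrite addSn => -[].
have h1 : ((dotl l a)^-1 * dotl l a)%:MP = 1 :> R by rewrite mulVf // mpolyC1.
move: h1; move: ((dotl l a)^-1) => e h1.
rewrite big_cons; set G := \prod_(a <- ls) (a.2 *: X0 - a.1 *: X1) in E *; clearbody G.
exists (c * l.2 * e), ((e * dotl l a) *: (X0 * U) + (e * a.1 * c) *: G).
rewrite exprS -mulrA E.
rewrite -[X in X = _]mul1r -[X in X * _ = _]h1 /dotl -!mul_mpolyC; ring.
Qed.

Lemma prod6 (F : 'I_6 -> R) : \prod_(i<6) F i = F vx0 * F vx1 * F vy0 * F vy1 * F vz0 * F vz1.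
Proof.
rewrite (eq_bigr (fun i : 'I_6 => F (inord i))); last by move=> i _; rewrite inord_val.
rewrite -(big_mkord xpredT (fun i => F (inord i))).
by rewrite !big_nat_recr //= big_geq // mul1r.
Qed.

Definition Qf (A B : seq (K * K)) (l l' : K * K) (f : R) : Prop :=
  exists W U V, f = \prod_(a <- A) frm a vx0 vx1 * \prod_(b <- B) frm b vy0 vy1 * W
                   + lnf l vx0 vx1 * U + lnf l' vy0 vy1 * V.

Lemma Qmono A B l l' (m : 'X_{1..6}) :
  all (fun a => dotl l a != 0) A -> all (fun a => dotl l' a != 0) B ->
  (m vx0 + m vx1 = size A)%N -> (m vy0 + m vy1 = size B)%N -> Qf A B l l' 'X_[m].
Proof.
move=> hA hB sA sB.
have [c1 [U1 E1]] := @keylist 'X_vx0 'X_vx1 l A hA _ _ sA.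
have [c2 [U2 E2]] := @keylist 'X_vy0 'X_vy1 l' B hB _ _ sB.
rewrite /Qf /frm /lnf mpolyXE_id prod6.
move: E1 E2.
set GA := \prod_(a <- A) _; set GB := \prod_(b <- B) _.
set x0 := 'X_vx0 ^+ _; set x1 := 'X_vx1 ^+ _; set y0 := 'X_vy0 ^+ _; set y1 := 'X_vy1 ^+ _.
set z0 := 'X_vz0 ^+ _; set z1 := 'X_vz1 ^+ _.
clearbody GA GB x0 x1 y0 y1 z0 z1 => E1 E2.
exists ((c1 * c2) *: (z0 * z1)), (U1 * (c2 *: GB + (l'.1 *: 'X_vy0 + l'.2 *: 'X_vy1) * U2) * (z0 * z1)),
  (c1 *: GA * U2 * (z0 * z1)).
have -> : x0 * x1 * y0 * y1 * z0 * z1 = (x0 * x1) * (y0 * y1) * (z0 * z1) by ring.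
rewrite E1 E2 -!mul_mpolyC; ring.
Qed.

Lemma Qadd A B l l' f g : Qf A B l l' f -> Qf A B l l' g -> Qf A B l l' (f + g).
Proof.
move=> [W1 [U1 [V1 ->]]] [W2 [U2 [V2 ->]]].
by exists (W1 + W2), (U1 + U2), (V1 + V2); ring.
Qed.

Lemma Qscale A B l l' c f : Qf A B l l' f -> Qf A B l l' (c *: f).
Proof.
move=> [W [U [V ->]]].
by exists (c *: W), (c *: U), (c *: V); rewrite -!mul_mpolyC; ring.
Qed.

Lemma Qall A B l l' (f : R) :
  all (fun a => dotl l a != 0) A -> all (fun a => dotl l' a != 0) B ->
  (forall m, m \in msupp f -> (m vx0 + m vx1 = size A)%N /\ (m vy0 + m vy1 = size B)%N) ->
  Qf A B l l' f.
Proof.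
move=> hA hB hm.
suff : Qf A B l l' (\sum_(m <- msupp f) f@_m *: 'X_[m]) by rewrite -mpolyE.
rewrite big_seq; apply: big_ind.
- by exists 0, 0, 0; rewrite !mulr0 !addr0.
- exact: Qadd.
- move=> m /hm [h1 h2]; apply: Qscale; exact: Qmono.
Qed.

Lemma countA (pr : P3 K -> K * K) (X : seq (P3 K)) (l : K * K) :
  l != (0, 0) -> (forall P, P \in X -> pr P != (0, 0)) ->
  forall P0, P0 \in X -> dotl l (pr P0) == 0 ->
  size [seq a <- undup [seq P1_norm (pr P) | P <- X] | dotl l a != 0] =
  (size (undup [seq P1_norm (pr P) | P <- X])).-1.
Proof.
move=> hl hX P0 P0X D0; set s := undup _.
have hc : count (fun a => dotl l a == 0) s = 1%N.
  rewrite (@eq_in_count _ _ (pred1 (P1_norm (pr P0)))).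
    by rewrite count_uniq_mem ?undup_uniq // mem_undup (map_f _ P0X).
  move=> a; rewrite mem_undup => /mapP [P PX ->] /=.
  rewrite norm_dot ?hX //; apply/idP/eqP => [D | E].
    exact: (@norm_uniq l (pr P) (pr P0) hl (hX P PX) (hX P0 P0X) D D0).
  by rewrite -norm_dot ?hX // E norm_dot ?hX.
have := count_predC (fun a => dotl l a != 0) s.
rewrite size_filter.
have -> : count (predC (fun a => dotl l a != 0)) s = count (fun a => dotl l a == 0) s.
  by apply: eq_count => a /=; rewrite negbK.
by rewrite hc addn1 => <-.
Qed.

Lemma inA (A : seq (K * K)) i j (u : K * K) : u != (0, 0) -> P1_norm u \in A ->
  exists lam (Rr : R), \prod_(a <- A) frm a i j = (lam *: frm u i j) * Rr.
Proof.
move=> hu hm; rewrite (big_rem _ hm) /=.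
have [lam E] := @normform u i j hu.
by exists lam, (\prod_(y <- rem (P1_norm u) A) frm y i j); rewrite E.
Qed.

Lemma main_sum (X : seq (P3 K)) (hX : point_set X) (l l' : K * K)
  (hl : l != (0, 0)) (hl' : l' != (0, 0)) (hmeet : has (on_line l l') X) (f : R) :
  (forall m, m \in msupp f ->
     (m vx0 + m vx1 = (card_pi1 X).-1)%N /\ (m vy0 + m vy1 = (card_pi2 X).-1)%N) ->
  in_sum_IY (filter (predC (on_line l l')) X) (filter (on_line l l') X) f.
Proof.
move=> hm.
have hok : forall P, P \in X -> [/\ P.1.1 != (0, 0), P.1.2 != (0, 0) & P.2 != (0, 0)].
  by move=> P PX; move: hX => /andP[/allP H _]; move/H: PX => /and3P.
case/hasP: hmeet => P0 P0X; rewrite /on_line => /andP[D1 D2].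
have sA := @countA (fun P => P.1.1) X l hl (fun P PX => let: And3 h _ _ := hok P PX in h) P0 P0X D1.
have sB := @countA (fun P => P.1.2) X l' hl' (fun P PX => let: And3 _ h _ := hok P PX in h) P0 P0X D2.
set A := [seq a <- _ | dotl l a != 0] in sA.
set B := [seq a <- _ | dotl l' a != 0] in sB.
have hA : all (fun a => dotl l a != 0) A by apply/allP => a; rewrite mem_filter => /andP[].
have hB : all (fun a => dotl l' a != 0) B by apply/allP => a; rewrite mem_filter => /andP[].
have [W [U [V Ef]]] : Qf A B l l' f.
  apply: Qall hA hB _ => m /hm [h1 h2]; rewrite sA sB; split; [exact: h1 | exact: h2].
exists (\prod_(a <- A) frm a vx0 vx1 * \prod_(b <- B) frm b vy0 vy1 * W),
  (lnf l vx0 vx1 * U + lnf l' vy0 vy1 * V); split; last by rewrite Ef addrA.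
- move=> [[u v] w]; rewrite mem_filter /= => /andP[off PX].
  have [hu hv _] := hok _ PX.
  move: off; rewrite /on_line /= -/(dotl l u) -/(dotl l' v) negb_and.
  case: (boolP (dotl l u == 0)) => Du /= Dv.
    have [|lam [Rr E]] := @inA B vy0 vy1 v hv.
      by rewrite mem_filter norm_dot // Dv mem_undup; apply/mapP; exists (u, v, w).
    exists 0, (lam *: (\prod_(a <- A) frm a vx0 vx1 * Rr * W)), 0.
    rewrite E; move: (\prod_(a <- A) frm a vx0 vx1) => GA.
    rewrite /frm -!mul_mpolyC; ring.
  have [|lam [Rr E]] := @inA A vx0 vx1 u hu.
    by rewrite mem_filter norm_dot // Du mem_undup; apply/mapP; exists (u, v, w).
  exists (lam *: (Rr * \prod_(b <- B) frm b vy0 vy1 * W)), 0, 0.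
  rewrite E; move: (\prod_(b <- B) frm b vy0 vy1) => GB.
  rewrite /frm -!mul_mpolyC; ring.
- move=> [[u v] w]; rewrite mem_filter /on_line /= => /andP[/andP[Du Dv] PX].
  have [hu hv _] := hok _ PX.
  have [mu Eu] := @linform l u vx0 vx1 hu Du.
  have [mu' Ev] := @linform l' v vy0 vy1 hv Dv.
  exists (mu *: U), (mu' *: V), 0.
  rewrite Eu Ev /frm -!mul_mpolyC; ring.
Qed.
End S0.

Theorem lemma2p7 (K : closedFieldType) (charK0 : [pchar K] =i pred0)
  (X : seq (P3 K)) (hX : point_set X)
  (l l' : K * K) (hl : l != (0, 0)) (hl' : l' != (0, 0))
  (hmeet : has (on_line l l') X) (hnsub : ~~ all (on_line l l') X) :
  let X2 := filter (on_line l l') X in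
  let X1 := filter (predC (on_line l l')) X in
  let t1 := card_pi1 X in
  let t2 := card_pi2 X in
  (forall f : {mpoly K[6]}, in_trideg t1.-1 t2.-1 0 f -> in_sum_IY X1 X2 f) /\
  (forall (k : nat) (f : {mpoly K[6]}), in_trideg t1.-1 t2.-1 k f -> in_sum_IY X1 X2 f).
Proof.
move=> X2 X1 t1 t2.
have key : forall k (f : {mpoly K[6]}), in_trideg t1.-1 t2.-1 k f -> in_sum_IY X1 X2 f.
  move=> k f hf; apply: (@main_sum K X hX l l' hl hl' hmeet f) => m /hf [h1 h2 _].
  by split.
by split; [exact: key 0%N | exact: key].
Qed.
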